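(* Let $\Gamma\subseteq\mathrm{Aff}(\mathbb{R}^n)$ be an $n$-dimensional crystallographic group whose subgroup of pure translations is exactly $\mathbb{Z}^n$. Then there exists a finite set $\Delta^{base}\subseteq\mathbb{R}^n$, with $\xi_{(d,I_n)}\in\mathrm{Aut}(\Gamma)$ for every $d\in\Delta^{base}$, such that the following holds: whenever $\varphi,\psi\in\mathrm{Aut}(\Gamma)$ satisfy $\varphi|_{\mathbb{Z}^n}=\psi|_{\mathbb{Z}^n}$, there exist $d^{base}\in\Delta^{base}$ and an inner automorphism $\iota$ of $\Gamma$ such that $\psi=\iota\circ\xi_{(d^{base},I_n)}\circ\varphi$.
   Context: $\mathrm{Aff}(\mathbb{R}^n)=\mathbb{R}^n\rtimes\mathrm{GL}_n(\mathbb{R})$ with multiplication $(d_1,D_1)(d_2,D_2)=(d_1+D_1d_2,D_1D_2)$. An $n$-dimensional crystallographic group is a discrete cocompact subgroup of $\mathbb{R}^n\rtimes O(n)$; here it is realised inside $\mathrm{Aff}(\mathbb{R}^n)$ such that $\Gamma\cap\mathbb{R}^n=\{(z,I_n)\mid z\in\mathbb{Z}^n\}$, identified with $\mathbb{Z}^n$; all other elements then have linear part in $\mathrm{GL}_n(\mathbb{Z})$. For $(d,D)\in\mathrm{Aff}(\mathbb{R}^n)$, $\xi_{(d,D)}$ denotes the map $\gamma\mapsto(d,D)\gamma(d,D)^{-1}$. Every automorphism of $\Gamma$ is of the form $\xi_{(d,D)}$ for some $(d,D)\in\mathrm{Aff}(\mathbb{R}^n)$. *)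

(* Defs.v *)
From mathcomp Require Import all_boot all_order all_algebra.
From mathcomp Require Import all_classical all_reals all_analysis.
Set Implicit Arguments. Unset Strict Implicit. Unset Printing Implicit Defensive.
Import Order.TTheory GRing.Theory Num.Theory.
Import numFieldTopology.Exports numFieldNormedType.Exports.
Local Open Scope classical_set_scope.
Local Open Scope ring_scope.

Section Affine.
Variables (R : realType) (n : nat).

Definition aff := ('cV[R]_n * 'M[R]_n)%type.

Definition is_aff (g : aff) : Prop := g.2 \in unitmx.

Definition aff_mul (g h : aff) : aff := (g.1 + g.2 *m h.1, g.2 *m h.2).
Definition aff_one : aff := (0, 1%:M).
Definition aff_inv (g : aff) : aff := (- (invmx g.2 *m g.1), invmx g.2).

Definition xi (g : aff) (x : aff) : aff := aff_mul (aff_mul g x) (aff_inv g).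

Definition euclid : set aff := [set g | g.2^T *m g.2 = 1%:M].

Definition aff_subgroup (G : set aff) : Prop :=
  (forall g, G g -> is_aff g) /\ G aff_one /\
  (forall g h, G g -> G h -> G (aff_mul g h)) /\
  (forall g, G g -> G (aff_inv g)).

Definition discrete_subset (G : set aff) : Prop :=
  forall g, G g -> exists U : set aff, nbhs g U /\ U `&` G = [set g].

(* G is cocompact in the Euclidean group E: G \ E is compact, i.e. there is
   a compact K in E with E = G K *)
Definition cocompact_in_euclid (G : set aff) : Prop :=
  exists K : set aff, compact K /\ K `<=` euclid /\
    forall x, euclid x -> exists g k, G g /\ K k /\ x = aff_mul g k.

(* n-dimensional crystallographic group, realised inside Aff(R^n): the
   conjugate, by some affine map, of a discrete cocompact subgroup of
   R^n x| O(n). *)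
Definition crystallographic (Gamma : set aff) : Prop :=
  aff_subgroup Gamma /\
  exists alpha : aff, is_aff alpha /\
    let G' := xi alpha @` Gamma in
    aff_subgroup G' /\ G' `<=` euclid /\ discrete_subset G' /\
    cocompact_in_euclid G'.

Definition translations_are_Zn (Gamma : set aff) : Prop :=
  forall d : 'cV[R]_n, Gamma (d, 1%:M) <->
    exists z : 'cV[int]_n, d = map_mx (fun x : int => x%:~R) z.

Definition is_aut (Gamma : set aff) (phi : aff -> aff) : Prop :=
  (forall g, Gamma g -> Gamma (phi g)) /\
  (forall g h, Gamma g -> Gamma h -> phi (aff_mul g h) = aff_mul (phi g) (phi h)) /\
  (forall g h, Gamma g -> Gamma h -> phi g = phi h -> g = h) /\
  (forall h, Gamma h -> exists g, Gamma g /\ phi g = h).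

End Affine.

(* Main.v *)
Require Import Defs.
From mathcomp Require Import all_boot all_order all_algebra.
From mathcomp Require Import all_classical all_reals all_analysis.
From mathcomp Require Import ring lra zify.
Import Order.TTheory GRing.Theory Num.Theory.
Local Open Scope classical_set_scope.
Local Open Scope ring_scope.

Section Alg.
Variables (R : realType) (n : nat).
Local Notation aff := (aff R n).

Lemma aff_mulA (g h k : aff) : aff_mul (aff_mul g h) k = aff_mul g (aff_mul h k).
Proof. by rewrite /aff_mul /= mulmxDr !mulmxA addrA. Qed.

Lemma aff_mul1 (g : aff) : aff_mul (aff_one R n) g = g.
Proof. by case: g => a A; rewrite /aff_mul /= !mul1mx add0r. Qed.

Lemma aff_mulV (g : aff) : g.2 \in unitmx -> aff_mul g (aff_inv g) = aff_one R n.
Proof.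
case: g => a A /= uA; rewrite /aff_mul /aff_inv /aff_one /= mulmxN mulmxA.
by rewrite mulmxV // mul1mx subrr.
Qed.

Lemma aff_mulVg (g : aff) : g.2 \in unitmx -> aff_mul (aff_inv g) g = aff_one R n.
Proof.
case: g => a A /= uA; rewrite /aff_mul /aff_inv /aff_one /=.
by rewrite mulVmx // addNr.
Qed.

Lemma xiT (d : 'cV[R]_n) (g : aff) : xi (d, 1%:M) g = (d + g.1 - g.2 *m d, g.2).
Proof.
case: g => a A; rewrite /xi /aff_mul /aff_inv /= invmx1 !mul1mx mulmx1.
by rewrite mulmxN.
Qed.

Lemma aff_mulT (z : 'cV[R]_n) (g : aff) : aff_mul (z, 1%:M) g = (z + g.1, g.2).
Proof. by rewrite /aff_mul /= !mul1mx. Qed.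

Lemma aff_mul_T (g : aff) (z : 'cV[R]_n) : aff_mul g (z, 1%:M) = (g.1 + g.2 *m z, g.2).
Proof. by rewrite /aff_mul /= !mulmx1. Qed.

Lemma xiT_hom (d : 'cV[R]_n) (g h : aff) :
  xi (d, 1%:M) (aff_mul g h) = aff_mul (xi (d, 1%:M)  g) (xi (d, 1%:M) h).
Proof.
rewrite !xiT /aff_mul /=; congr pair.
rewrite !mulmxDr !mulmxN mulmxA !addrA; congr (_ - _).
rewrite -!addrA; congr (_ + _); congr (_ + _).
by rewrite addKr.
Qed.

End Alg.
Section Grp.
Variables (R : realType) (n : nat) (Gamma : set (aff R n)).
Hypothesis HG : aff_subgroup Gamma.
Hypothesis HT : translations_are_Zn Gamma.
Local Notation aff := (aff R n).

Definition isZ (v : 'cV[R]_n) := forall i j, v i j \is a Num.int.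

Lemma L_T d : Gamma (d, 1%:M) <-> isZ d.
Proof.
rewrite HT; split.
  by case=> z -> i j; rewrite mxE intr_int.
move=> Hd; exists (map_mx (@Num.floor R) d); apply/matrixP => i j.
by rewrite !mxE floorK.
Qed.

Lemma isZD u v : isZ u -> isZ v -> isZ (u + v).
Proof. by move=> Hu Hv i j; rewrite mxE rpredD. Qed.
Lemma isZN u : isZ u -> isZ (- u).
Proof. by move=> Hu i j; rewrite mxE rpredN. Qed.
Lemma isZB u v : isZ u -> isZ v -> isZ (u - v).
Proof. by move=> Hu Hv; apply: isZD => //; apply: isZN. Qed.
Lemma isZ0 : isZ 0.
Proof. by move=> i j; rewrite mxE rpred0. Qed.
Lemma isZ_sum (I : Type) (r : seq I) (F : I -> 'cV[R]_n) :
  (forall i, isZ (F i)) -> isZ (\sum_(i <- r) F i).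
Proof.
move=> HF; elim: r => [|a r IH]; first by rewrite big_nil; apply: isZ0.
by rewrite big_cons; apply: isZD.
Qed.
Lemma isZM (A : 'M[R]_n) u : (forall i j, A i j \is a Num.int) -> isZ u -> isZ (A *m u).
Proof.
move=> HA Hu i j; rewrite mxE; apply: rpred_sum => k _; exact: rpredM.
Qed.

Lemma G_unit g : Gamma g -> g.2 \in unitmx.
Proof. by move=> Gg; case: HG => H _; apply: H. Qed.
Lemma G_mul g h : Gamma g -> Gamma h -> Gamma (aff_mul g h).
Proof. by case: HG => _ [_ [H _]]; apply: H. Qed.
Lemma G_inv g : Gamma g -> Gamma (aff_inv g).
Proof. by case: HG => _ [_ [_ H]]; apply: H. Qed.
Lemma G_one : Gamma (aff_one R n).
Proof. by case: HG => _ [H _]. Qed.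

Lemma L_conjT g z : Gamma g -> isZ z -> isZ (g.2 *m z).
Proof.
move=> Gg Hz; apply/L_T.
have -> : (g.2 *m z, 1%:M) = aff_mul (aff_mul g (z, 1%:M)) (aff_inv g).
  rewrite aff_mul_T /aff_mul /aff_inv /=; congr pair; last by rewrite mulmxV // G_unit.
  by rewrite mulmxN mulmxA mulmxV ?G_unit // mul1mx addrAC subrr add0r.
by apply: G_mul; [apply: G_mul => //; apply/L_T|apply: G_inv].
Qed.

Lemma isZ_delta (j : 'I_n) : isZ (delta_mx j 0).
Proof. by move=> i k; rewrite mxE natr_int. Qed.

Lemma G_int g : Gamma g -> forall i j, g.2 i j \is a Num.int.
Proof.
move=> Gg i j; have := L_conjT _ _ Gg (isZ_delta j) i 0.
by rewrite -colE mxE.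
Qed.

Lemma mx_ext_Z (A B : 'M[R]_n) : (forall z, isZ z -> A *m z = B *m z) -> A = B.
Proof.
move=> H; apply/matrixP => i j.
have := congr1 (fun M : 'cV[R]_n => M i 0) (H _ (isZ_delta j)).
by rewrite -!colE !mxE.
Qed.

End Grp.
Arguments isZ {R n}.
Arguments L_T {R n Gamma}.
Arguments isZD {R n}. Arguments isZN {R n}. Arguments isZB {R n}. Arguments isZ0 {R n}.
Arguments isZ_sum {R n I}. Arguments isZM {R n}.
Arguments G_unit {R n Gamma}. Arguments G_mul {R n Gamma}. Arguments G_inv {R n Gamma}.
Arguments G_one {R n Gamma}. Arguments L_conjT {R n Gamma}. Arguments isZ_delta {R n}.
Arguments G_int {R n Gamma}. Arguments mx_ext_Z {R n}.
Section Bound.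
Variables (R : realType) (n : nat) (Gamma : set (aff R n)).

Lemma sq_le1 (x : R) : x * x <= 1 -> `|x| <= 1.
Proof. by move=> H; case: (lerP 0 x) => hx; [rewrite ger0_norm // | rewrite ltr0_norm //]; nra. Qed.

Lemma term_le_sum (I : finType) (F : I -> R) (i : I) :
  (forall j, 0 <= F j) -> F i <= \sum_j F j.
Proof.
move=> H; rewrite (bigD1 i) //= lerDl; exact: sumr_ge0.
Qed.
Arguments term_le_sum {I} F i.

Lemma G_bound : crystallographic Gamma ->
  exists K : nat, forall g, Gamma g -> forall i j, `|g.2 i j| <= K%:R.
Proof.
case=> _ [alpha [ua [_ [Heu _]]]].
set B := alpha.2; set Bi := invmx B.
pose b (i j : 'I_n) := \sum_l (\sum_k `|Bi i k|) * `|B l j|.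
pose K0 := \sum_i \sum_j b i j.
have b0 : forall i j, 0 <= b i j.
  move=> i j; apply: sumr_ge0 => l _; apply: mulr_ge0 => //; exact: sumr_ge0.
have K00 : 0 <= K0 by apply: sumr_ge0 => i _; apply: sumr_ge0.
exists (Num.Def.archi_bound K0) => g Gg i j.
apply/ltW/(le_lt_trans _ (archi_boundP K00)).
have h1 : b i j <= K0.
  apply: (le_trans (term_le_sum (fun j => b i j) j (b0 i))).
  by apply: (term_le_sum (fun i => \sum_j b i j)) => i'; apply: sumr_ge0.
apply: (le_trans _ h1).
have Heg : euclid (xi alpha g) by apply: Heu; exists g.
set Q := (xi alpha g).2 in Heg.
have HQ : Q = (B *m g.2) *m Bi by [].
have Hg : g.2 = (Bi *m Q) *m B.
  by rewrite HQ !mulmxA mulVmx // mul1mx -mulmxA mulVmx // mulmx1.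
have Q1 : forall k l, `|Q k l| <= 1.
  move=> k l; apply: sq_le1.
  have H : \sum_k Q k l * Q k l = 1.
    have := congr1 (fun M : 'M[R]_n => M l l) Heg; rewrite /= !mxE eqxx /= => E.
    by apply: (eq_trans _ E); apply: eq_bigr => k' _; rewrite [in RHS]mxE.
  rewrite -H; apply: (term_le_sum (fun k => Q k l * Q k l)) => k'.
  by rewrite -expr2 sqr_ge0.
rewrite Hg mxE; apply: (le_trans (ler_norm_sum _ _ _)); apply: ler_sum => l _.
rewrite normrM; apply: ler_wpM2r => //.
rewrite mxE; apply: (le_trans (ler_norm_sum _ _ _)); apply: ler_sum => k _.
rewrite normrM; rewrite -[X in _ <= X]mulr1; apply: ler_wpM2l => //.
Qed.

End Bound.
Section Unip.
Variables (R : realType) (n : nat) (Gamma : set (aff R n)).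
Hypothesis HG : aff_subgroup Gamma.
Hypothesis HT : translations_are_Zn Gamma.
Variable K : nat.
Hypothesis HK : forall g, Gamma g -> forall i j, `|g.2 i j| <= K%:R.
Local Notation aff := (aff R n).

Lemma norm_shift (c y : R) (k : R) : `|c| <= 1 -> `|c + y| <= k -> `|y| <= k + 1.
Proof.
move=> hc hk; have -> : y = (c + y) - c by rewrite addrC addKr.
by apply: (le_trans (ler_normB _ _)); apply: lerD.
Qed.

Lemma L_unip (S : set aff) :
  (forall s, S s -> Gamma s) ->
  (forall s s', S s -> S s' -> aff_mul s s' = aff_mul s' s) ->
  (forall s z, S s -> isZ z -> exists s', S s' /\ aff_mul (z, 1%:M) s = aff_mul s' (z, 1%:M)) ->
  forall s, S s -> s.2 = 1%:M.
Proof.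
move=> SG Sab Snor s Ss.
set B := s.2; set N := B - 1%:M.
have step_a : forall z, isZ z -> N *m (N *m z) = 0.
  move=> z Hz; have [s' [Ss' E]] := Snor s z Ss Hz.
  move: E; rewrite aff_mulT aff_mul_T => -[E1 E2].
  have := Sab s s' Ss Ss'; rewrite /aff_mul => -[C1 _].
  rewrite -E2 -/B in E1 C1.
  have Hw : s'.1 - s.1 = - (N *m z).
    by rewrite mulmxBl mul1mx opprB; apply/eqP; rewrite subr_eq addrAC E1 addrK.
  have Nw : N *m (s'.1 - s.1) = 0.
    rewrite mulmxBl mul1mx mulmxBr; apply/eqP; rewrite subr_eq0; apply/eqP.
    by apply/eqP; rewrite subr_eq addrAC -C1 addrAC subrr add0r.
  by move: Nw; rewrite Hw mulmxN => /eqP; rewrite oppr_eq0 => /eqP.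
have Nsq : N *m N = 0.
  apply: mx_ext_Z => z Hz; by rewrite -mulmxA step_a // mul0mx.
pose pw k := iter k (aff_mul s) (aff_one R n).
have Gpw : forall k, Gamma (pw k).
  elim=> [|k IH]; first exact: (G_one HG).
  exact: (G_mul HG _ _ (SG _ Ss) IH).
have BN : B *m N = N by rewrite -[B in B *m _](subrK 1%:M) -/N mulmxDl Nsq add0r mul1mx.
have pw2 : forall k, (pw k).2 = 1%:M + k%:R *: N.
  elim=> [|k IH] /=; first by rewrite scale0r addr0.
  rewrite IH -/B mulmxDr mulmx1 -scalemxAr BN.
  rewrite -[B](subrK 1%:M) -/N -[k.+1%:R]/((1 : R) *+ k.+1) mulrS scalerDl scale1r.
  by rewrite addrA [N + _]addrC.
have Nz : forall i j, N i j = 0.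
  move=> i j; apply/eqP; apply/negPn/negP => nz.
  set x := N i j in nz.
  have xp : 0 < `|x| by rewrite normr_gt0.
  pose m := Num.Def.archi_bound ((K%:R + 1) / `|x|).
  have hm : (K%:R + 1) / `|x| < m%:R.
    apply: archi_boundP; apply: divr_ge0 => //; apply: addr_ge0 => //.
  have ex : x = B i j - (i == j)%:R by rewrite /x /N !mxE.
  have := HK _ (Gpw m) i j; rewrite pw2 !mxE -ex => hb.
  have h1 : `|(m%:R * x)| <= K%:R + 1.
    apply: (norm_shift _ _ _ _ hb); by case: (i == j); rewrite ?normr1 ?normr0.
  move: hm; rewrite ltr_pdivrMr // => hm.
  by move: h1; rewrite normrM normr_nat => h1; move: (lt_le_trans hm h1); rewrite ltxx.
have : N = 0 by apply/matrixP => i j; rewrite Nz mxE.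
by move/eqP; rewrite subr_eq0 => /eqP.
Qed.

End Unip.
Section Auts.
Variables (R : realType) (n : nat) (Gamma : set (aff R n)).
Hypothesis HG : aff_subgroup Gamma.
Hypothesis HT : translations_are_Zn Gamma.
Variable K : nat.
Hypothesis HK : forall g, Gamma g -> forall i j, `|g.2 i j| <= K%:R.
Local Notation aff := (aff R n).

Lemma unit_cancel_r (P A : 'M[R]_n) : A \in unitmx -> P *m A = A -> P = 1%:M.
Proof.
move=> uA E; have := congr1 (fun M => M *m invmx A) E.
by rewrite -mulmxA mulmxV // mulmx1.
Qed.

Lemma unit_cancel_l (P A : 'M[R]_n) : A \in unitmx -> A *m P = A -> P = 1%:M.
Proof.
move=> uA E; have := congr1 (fun M => invmx A *m M) E.
by rewrite mulmxA mulVmx // mul1mx.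
Qed.

Lemma preT phi : is_aut Gamma phi -> forall g, Gamma g -> (phi g).2 = 1%:M -> g.2 = 1%:M.
Proof.
case=> [Hin [Hhom [Hinj Hsurj]]] g Gg Pg.
pose S := [set g | Gamma g /\ (phi g).2 = 1%:M].
apply: (@L_unip R n Gamma HG K HK S) => //.
- by move=> s [].
- move=> s s' [Gs Ps] [Gs' Ps']; apply: Hinj; try by apply: (G_mul HG).
  rewrite !Hhom //; case: (phi s) Ps => a A /= ->; case: (phi s') Ps' => a' A' /= ->.
  by rewrite /aff_mul /= !mul1mx addrC.
- move=> s z [Gs Ps] Hz.
  have Gz : Gamma (z, 1%:M) by apply/(L_T HT).
  have Gmz : Gamma (- z, 1%:M) by apply/(L_T HT); apply: isZN.
  pose s' := aff_mul (aff_mul (z, 1%:M) s) (- z, 1%:M).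
  have Gs' : Gamma s' by apply: (G_mul HG) => //; apply: (G_mul HG).
  have E : aff_mul (z, 1%:M) s = aff_mul s' (z, 1%:M).
    by rewrite /s' aff_mulA aff_mul_T aff_mulT /= mul1mx addNr aff_mul_T mulmx0 addr0.
  clearbody s'; exists s'; split => //; split => //.
  have := congr1 phi E; rewrite !Hhom // => /(congr1 snd) /=.
  rewrite Ps mulmx1 => E2; apply: (unit_cancel_r _ (phi (z, 1%:M)).2) => //.
  by apply: (G_unit HG); apply: Hin.
Qed.

Variables phi psi : aff -> aff.
Hypothesis Hphi : is_aut Gamma phi.
Hypothesis Hpsi : is_aut Gamma psi.
Hypothesis Hag : forall g, Gamma g -> g.2 = 1%:M -> phi g = psi g.

Lemma phi_in g : Gamma g -> Gamma (phi g). Proof. by case: Hphi => H _; apply: H. Qed.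
Lemma psi_in g : Gamma g -> Gamma (psi g). Proof. by case: Hpsi => H _; apply: H. Qed.
Lemma phi_hom g h : Gamma g -> Gamma h -> phi (aff_mul g h) = aff_mul (phi g) (phi h).
Proof. by case: Hphi => _ [H _]; apply: H. Qed.
Lemma psi_hom g h : Gamma g -> Gamma h -> psi (aff_mul g h) = aff_mul (psi g) (psi h).
Proof. by case: Hpsi => _ [H _]; apply: H. Qed.

Lemma surjT y : isZ y -> exists t, Gamma t /\ t.2 = 1%:M /\ phi t = (y, 1%:M).
Proof.
move=> Hy; have Gy : Gamma (y, 1%:M) by apply/(L_T HT).
case: Hphi => _ [_ [_ Hs]]; have [g [Gg Pg]] := Hs _ Gy.
exists g; split => //; split => //; apply: (preT _ Hphi) => //; by rewrite Pg.
Qed.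

Lemma lin_eq g : Gamma g -> (psi g).2 = (phi g).2.
Proof.
move=> Gg; apply: mx_ext_Z => y Hy.
have [t [Gt [t2 Pt]]] := surjT _ Hy.
have Qt : psi t = (y, 1%:M) by rewrite -Hag.
move: Gt Pt Qt; case: t t2 => z t2 /= -> Gt Pt Qt.
have Hz : isZ z by apply/(L_T HT).
pose t' := (g.2 *m z, 1%:M : 'M[R]_n).
have Gt' : Gamma t' by apply/(L_T HT); apply: (L_conjT HG HT).
have E : aff_mul g (z, 1%:M) = aff_mul t' g by rewrite aff_mul_T aff_mulT addrC.
have E1 := congr1 phi E; have E2 := congr1 psi E.
rewrite !phi_hom // Pt in E1; rewrite !psi_hom // Qt -(Hag _ Gt') // in E2.
move: E1 E2; set W := phi t'.
have uA : (phi g).2 \in unitmx by apply: (G_unit HG); apply: phi_in.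
rewrite !aff_mul_T /aff_mul => -[E1a E1b] [E2a E2b].
have W1 : W.2 = 1%:M by apply: (unit_cancel_r _ _ uA); rewrite -E1b.
rewrite W1 mul1mx in E1a E2a.
rewrite mul1mx in E2a.
have e2 : (psi g).2 *m y = W.1 by apply: (addIr (psi g).1); rewrite addrC E2a.
have e1 : (phi g).2 *m y = W.1 by apply: (addIr (phi g).1); rewrite addrC E1a.
by rewrite e1 e2.
Qed.

Definition delta g := (psi g).1 - (phi g).1.

Lemma psi_delta g : Gamma g -> psi g = aff_mul (delta g, 1%:M) (phi g).
Proof.
move=> Gg; rewrite aff_mulT /delta subrK -(lin_eq _ Gg).
by case: (psi g).
Qed.

Lemma delta_int g : Gamma g -> isZ (delta g).
Proof.
move=> Gg; apply/(L_T HT).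
have uA : (phi g).2 \in unitmx by apply: (G_unit HG); apply: phi_in.
have -> : (delta g, 1%:M) = aff_mul (psi g) (aff_inv (phi g)).
  rewrite /aff_mul /aff_inv /delta /= lin_eq //.
  by rewrite mulmxV // mulmxN mulmxA mulmxV // mul1mx.
apply: (G_mul HG); first exact: psi_in.
by apply: (G_inv HG); apply: phi_in.
Qed.

Lemma delta_cocycle g1 g2 : Gamma g1 -> Gamma g2 ->
  delta (aff_mul g1 g2) = delta g1 + (phi g1).2 *m delta g2.
Proof.
move=> G1 G2; rewrite /delta phi_hom // psi_hom // /aff_mul /= lin_eq //.
rewrite mulmxBr opprD !addrA; congr (_ - _).
by rewrite addrAC.
Qed.

Lemma delta_dep g1 g2 : Gamma g1 -> Gamma g2 -> (phi g1).2 = (phi g2).2 ->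
  delta g1 = delta g2.
Proof.
move=> G1 G2 E.
pose h := aff_mul (aff_inv g1) g2.
have Gh : Gamma h by apply: (G_mul HG) => //; apply: (G_inv HG).
have Eg : g2 = aff_mul g1 h by rewrite /h -aff_mulA aff_mulV ?(G_unit HG) // aff_mul1.
have uA : (phi g1).2 \in unitmx by apply: (G_unit HG); apply: phi_in.
have h2 : (phi h).2 = 1%:M.
  have e : (phi g2).2 = (phi g1).2 *m (phi h).2 by rewrite Eg phi_hom.
  by apply: (unit_cancel_l _ _ uA); rewrite -e E.
have hT : h.2 = 1%:M by apply: (preT _ Hphi).
have dh : delta h = 0 by rewrite /delta (Hag _ Gh hT) subrr.
by rewrite Eg delta_cocycle // dh mulmx0 addr0.
Qed.

End Auts.
Section XiAlg.
Variables (R : realType) (n : nat).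

Lemma xiT_comp (u v : 'cV[R]_n) x :
  xi (u, 1%:M) (xi (v, 1%:M) x) = xi (u + v, 1%:M) x.
Proof.
rewrite !xiT /=; congr pair.
by rewrite mulmxDr opprD !addrA [in RHS]addrAC.
Qed.

Lemma xiT0 x : xi (0 : 'cV[R]_n, 1%:M) x = x.
Proof. by rewrite xiT mulmx0 subr0 add0r; case: x. Qed.

Lemma sum_const_seq (I : Type) (r : seq I) (c : 'cV[R]_n) :
  \sum_(i <- r) c = c *+ size r.
Proof. by elim: r => [|a r IH]; rewrite ?big_nil ?big_cons ?IH ?mulrS. Qed.

Lemma isZ_sum_in (I : eqType) (r : seq I) (F : I -> 'cV[R]_n) :
  (forall i, i \in r -> isZ (F i)) -> isZ (\sum_(i <- r) F i).
Proof.
elim: r => [|a r IH] H; first by rewrite big_nil; apply: isZ0.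
rewrite big_cons; apply: isZD; first by apply: H; rewrite inE eqxx.
by apply: IH => i ir; apply: H; rewrite inE ir orbT.
Qed.

End XiAlg.

Section Final.
Variables (R : realType) (n : nat) (Gamma : set (aff R n)).
Hypothesis HG : aff_subgroup Gamma.
Hypothesis HT : translations_are_Zn Gamma.
Variable K : nat.
Hypothesis HK : forall g, Gamma g -> forall i j, `|g.2 i j| <= K%:R.
Local Notation aff := (aff R n).

Lemma aut_xiT (e : 'cV[R]_n) :
  (forall g, Gamma g -> isZ (e - g.2 *m e)) -> is_aut Gamma (xi (e, 1%:M)).
Proof.
move=> He.
have xin : forall e', (forall g, Gamma g -> isZ (e' - g.2 *m e')) ->
    forall g, Gamma g -> Gamma (xi (e', 1%:M) g).
  move=> e' He' g Gg.
  have -> : xi (e', 1%:M) g = aff_mul (e' - g.2 *m e', 1%:M) g.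
    by rewrite xiT aff_mulT addrAC.
  by apply: (G_mul HG) => //; apply/(L_T HT); apply: He'.
split; first exact: xin.
split; first by move=> g h _ _; apply: xiT_hom.
split.
  move=> g h _ _; rewrite !xiT => -[E1 E2].
  move: E1; rewrite E2 => /addIr /addrI E1.
  by case: g h E1 E2 => a A [b B] /= -> ->.
move=> h Gh; exists (xi (- e, 1%:M) h); split.
  apply: xin => // g Gg; rewrite mulmxN opprK addrC -opprB; apply: isZN; exact: He.
by rewrite xiT_comp subrr xiT0.
Qed.

Definition ptg : set 'M[R]_n := [set A | exists g, Gamma g /\ g.2 = A].

Definition Mf (f : {ffun 'I_n * 'I_n -> 'I_(K.*2.+1)}) : 'M[R]_n :=
  \matrix_(i, j) ((f (i, j) : nat)%:R - K%:R).

Definition Fseq := undup [seq A <- map Mf (enum {ffun 'I_n * 'I_n -> 'I_(K.*2.+1)}) | `[< ptg A >]].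

Lemma Fseq_uniq : uniq Fseq.
Proof. exact: undup_uniq. Qed.

Lemma int_bound_repr (a : R) : a \is a Num.int -> `|a| <= K%:R ->
  exists k : 'I_(K.*2.+1), a = (k : nat)%:R - K%:R.
Proof.
move=> ai ab; set m := Num.floor a.
have am : a = m%:~R by rewrite floorK.
have mb : `|m| <= K%:Z.
  by rewrite -(ler_int R) intr_norm -am.
have m0 : 0 <= m + K%:Z by lia.
have mlt : (absz (m + K%:Z)%R < K.*2.+1)%N by lia.
exists (Ordinal mlt) => /=.
by rewrite natr_absz ger0_norm // intrD -am addrK.
Qed.

Lemma mem_Fseq A : (A \in Fseq) <-> ptg A.
Proof.
rewrite mem_undup mem_filter; split; first by case/andP => /asboolP.
move=> PA; apply/andP; split; first by apply/asboolP.
case: PA => g [Gg <-].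
have H : forall ij : 'I_n * 'I_n, exists k : 'I_(K.*2.+1), g.2 ij.1 ij.2 = (k : nat)%:R - K%:R.
  by move=> ij; apply: int_bound_repr; [apply: (G_int HG HT) | apply: HK].
have [f Hf] : exists f : {ffun 'I_n * 'I_n -> 'I_(K.*2.+1)}, forall ij, g.2 ij.1 ij.2 = (f ij : nat)%:R - K%:R.
  have [f0 Hf0] := choice H. by exists (finfun f0) => ij; rewrite ffunE.
have -> : g.2 = Mf f by apply/matrixP => i j; rewrite mxE (Hf (i, j)).
by apply: map_f; rewrite mem_enum.
Qed.

Lemma ptg_mul A B : ptg A -> ptg B -> ptg (A *m B).
Proof.
case=> g [Gg <-] [h [Gh <-]]; exists (aff_mul g h); split => //.
exact: (G_mul HG).
Qed.

Lemma ptg_unit A : ptg A -> A \in unitmx.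
Proof. by case=> g [Gg <-]; apply: (G_unit HG). Qed.

Lemma ptg_div A C : ptg A -> ptg C -> ptg (invmx A *m C).
Proof.
case=> g [Gg <-] [h [Gh <-]]; exists (aff_mul (aff_inv g) h); split => //.
by apply: (G_mul HG) => //; apply: (G_inv HG).
Qed.

Lemma ptg1 : ptg 1%:M.
Proof. by exists (aff_one R n); split => //; apply: (G_one HG). Qed.

Lemma Fseq_perm A : ptg A -> perm_eq Fseq (map (mulmx A) Fseq).
Proof.
move=> PA; have uA := ptg_unit _ PA.
apply: uniq_perm; first exact: Fseq_uniq.
  rewrite map_inj_uniq ?Fseq_uniq //; exact: (can_inj (mulKmx uA)).
move=> C; apply/idP/idP.
  move/mem_Fseq => PC; have -> : C = A *m (invmx A *m C) by rewrite mulKVmx.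
  by apply: map_f; apply/mem_Fseq; apply: ptg_div.
by case/mapP => B /mem_Fseq PB ->; apply/mem_Fseq; apply: ptg_mul.
Qed.

Lemma Fseq_size : (0 < size Fseq)%N.
Proof.
have : 1%:M \in Fseq by apply/mem_Fseq; apply: ptg1.
by case: Fseq.
Qed.

Variables phi psi : aff -> aff.
Hypothesis Hphi : is_aut Gamma phi.
Hypothesis Hpsi : is_aut Gamma psi.
Hypothesis Hag : forall g, Gamma g -> g.2 = 1%:M -> phi g = psi g.

Local Notation delta := (@delta R n phi psi).

Definition Dm (A : 'M[R]_n) := delta (xget (aff_one R n) [set g | Gamma g /\ (phi g).2 = A]).

Lemma Dm_spec g : Gamma g -> Dm (phi g).2 = delta g.
Proof.
move=> Gg; rewrite /Dm.
have [G' P'] : [set g' | Gamma g' /\ (phi g').2 = (phi g).2] (xget (aff_one R n) [set g' | Gamma g' /\ (phi g').2 = (phi g).2]).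
  by apply: xgetPex; exists g.
exact: (@delta_dep R n Gamma HG HT K HK phi psi Hphi Hpsi Hag).
Qed.

Lemma ptg_phi A : ptg A -> exists g, Gamma g /\ (phi g).2 = A.
Proof.
case=> h [Gh <-]; case: Hphi => _ [_ [_ Hs]]; have [g [Gg <-]] := Hs _ Gh.
by exists g.
Qed.

Lemma Dm_int A : ptg A -> isZ (Dm A).
Proof.
case/ptg_phi => g [Gg <-]; rewrite Dm_spec //.
exact: (@delta_int R n Gamma HG HT K HK phi psi Hphi Hpsi Hag).
Qed.

Lemma Dm_coc A B : ptg A -> ptg B -> Dm (A *m B) = Dm A + A *m Dm B.
Proof.
case/ptg_phi => g [Gg <-]; case/ptg_phi => h [Gh <-].
have -> : (phi g).2 *m (phi h).2 = (phi (aff_mul g h)).2 by rewrite (@phi_hom R n Gamma phi Hphi).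
rewrite !Dm_spec //; last by apply: (G_mul HG).
exact: (@delta_cocycle R n Gamma HG HT K HK phi psi Hphi Hpsi Hag).
Qed.

Definition Ssum := \sum_(B <- Fseq) Dm B.
Definition dav := ((size Fseq)%:R ^-1 : R) *: Ssum.

Lemma Dm_cob A : ptg A -> Dm A = dav - A *m dav.
Proof.
move=> PA.
have E : A *m Ssum = Ssum - Dm A *+ size Fseq.
  rewrite /Ssum mulmx_sumr.
  have -> : \sum_(B <- Fseq) A *m Dm B = \sum_(B <- Fseq) (Dm (A *m B) - Dm A).
    apply: eq_big_seq => B /mem_Fseq PB; rewrite Dm_coc //.
    by rewrite addrC addKr.
  rewrite sumrB sum_const_seq; congr (_ - _).
  rewrite -(big_map (mulmx A) xpredT Dm); apply: perm_big.
  by rewrite perm_sym; apply: Fseq_perm.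
have Nn : (size Fseq)%:R != (0 : R) by rewrite pnatr_eq0 -lt0n Fseq_size.
rewrite /dav -scalemxAr E scalerBr -[Dm A *+ _]scaler_nat scalerA mulVf // scale1r.
by rewrite opprB addrC subrK.
Qed.

End Final.
Arguments G_bound {R n Gamma}. Arguments Fseq_size {R n Gamma}. Arguments mem_Fseq {R n Gamma}.
Arguments Dm_int {R n Gamma}. Arguments aut_xiT {R n Gamma}. Arguments Dm_cob {R n Gamma}.
Arguments Dm_spec {R n Gamma}. Arguments psi_delta {R n Gamma}.
Lemma shift_lemma (R : realType) (n : nat) (x y : 'cV[R]_n) (A : 'M[R]_n) :
  (x - y) - A *m (x - y) = (x - A *m x) - (y - A *m y).
Proof.
rewrite mulmxBr !opprB.
by rewrite addrACA [in RHS]addrACA [- y + _]addrC.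
Qed.

Theorem corollary5p4 (R : realType) (n : nat) (Gamma : set (aff R n)) :
  crystallographic Gamma -> translations_are_Zn Gamma ->
  exists Delta_base : seq 'cV[R]_n,
    (forall d, d \in Delta_base -> is_aut Gamma (xi (d, 1%:M))) /\
    (forall phi psi : aff R n -> aff R n,
       is_aut Gamma phi -> is_aut Gamma psi ->
       (forall gamma, Gamma gamma -> gamma.2 = 1%:M -> phi gamma = psi gamma) ->
       exists d_base, d_base \in Delta_base /\
         exists iota_g, Gamma iota_g /\
           forall gamma, Gamma gamma ->
             psi gamma = xi iota_g (xi (d_base, 1%:M) (phi gamma))).
Proof.
move=> Hc HT.
have HG : aff_subgroup Gamma by case: Hc.
have [K HK] := G_bound Hc.
set N := size (Fseq R n Gamma K).
have N0 : (0 < N)%N by apply: (Fseq_size HG HT K HK).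
pose gridv (f : {ffun 'I_n -> 'I_N.+1}) : 'cV[R]_n := \col_i ((f i : nat)%:R / N%:R).
exists [seq d <- map gridv (enum {ffun 'I_n -> 'I_N.+1}) | `[< is_aut Gamma (xi (d, 1%:M)) >]].
split.
  by move=> d; rewrite mem_filter => /andP [/asboolP H _].
move=> phi psi Hphi Hpsi Hag.
set d := dav R n Gamma K phi psi.
set S := Ssum R n Gamma K phi psi.
have SZ : isZ S.
  apply: isZ_sum_in => B /(mem_Fseq HG HT K HK) PB.
  exact: (Dm_int HG HT K HK phi psi Hphi Hpsi Hag).
pose s i := Num.floor (S i 0).
pose qv : 'cV[R]_n := \col_i ((s i %/ N%:Z)%Z)%:~R.
pose f : {ffun 'I_n -> 'I_N.+1} := [ffun i => inord (absz ((s i %% N%:Z)%Z))].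
pose d0 := gridv f.
have Nz : (N%:Z != 0) by rewrite eqz_nat -lt0n.
have NR : (N%:R != 0 :> R) by rewrite pnatr_eq0 -lt0n.
have Hd : d = qv + d0.
  apply/matrixP => i j; rewrite (ord1 j) !mxE ffunE.
  have r0 : (0 <= (s i %% N%:Z)%Z) by apply: modz_ge0.
  have rN : ((s i %% N%:Z)%Z < N%:Z) by apply: ltz_pmod; rewrite ltz_nat.
  rewrite inordK; last by lia.
  rewrite natr_absz ger0_norm //.
  have -> : S i 0 = (s i)%:~R by rewrite floorK.
  rewrite {1}(divz_eq (s i) N%:Z) intrD intrM -/S.
  rewrite /d /dav -/N.
  have -> : ((N%:Z)%:~R : R) = N%:R by [].
  by field.
have qZ : isZ qv by move=> i j; rewrite mxE intr_int.
exists d0; split.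
  rewrite mem_filter; apply/andP; split; last by apply: map_f; rewrite mem_enum.
  apply/asboolP; apply: (aut_xiT HG HT) => g Gg.
  have -> : d0 = d - qv by rewrite Hd addrAC subrr add0r.
  rewrite shift_lemma; apply: isZB; last by apply: isZB => //; apply: (L_conjT HG HT).
  rewrite -(Dm_cob HG HT K HK phi psi Hphi Hpsi Hag); last by exists g.
  by apply: (Dm_int HG HT K HK phi psi Hphi Hpsi Hag); exists g.
exists (qv, 1%:M); split; first by apply/(L_T HT).
move=> g Gg; rewrite xiT_comp -Hd.
rewrite (psi_delta HG HT K HK phi psi Hphi Hpsi Hag) // -(Dm_spec HG HT K HK phi psi Hphi Hpsi Hag) //.
have Gp : Gamma (phi g) by case: Hphi => H _; apply: H.
rewrite (Dm_cob HG HT K HK phi psi Hphi Hpsi Hag); last by exists (phi g).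
by rewrite xiT aff_mulT addrAC.
Qed.
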